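(* Let $T$ be a basic maximal rigid object of $\mathcal{C}_n$ with top summand $T_1=(1,n-1)$, and let $X,Y\in\mathcal{F}$ with $X,Y\notin\operatorname{add}\tau T$. If $\sigma^{\mathcal{T}}_X=\sigma^{\mathcal{T}}_Y$ and $\sigma^{\mathcal{D}}_X=\sigma^{\mathcal{D}}_Y$, then $X=Y$.
   Context: Let $k$ be algebraically closed, $n\ge2$, $\mathcal{T}_n$ the tube of rank $n$ (finite-dimensional nilpotent representations of the cyclically oriented $\tilde A_{n-1}$-quiver; AR-translation $\tau$), $\mathcal{C}_n=D^b(\mathcal{T}_n)/\tau^{-1}[1]$ the cluster tube, with indecomposables identified with those of $\mathcal{T}_n$. Indecomposables have coordinates $(a,b)$, $a\in\mathbb{Z}/n$ (represented in $\{1,\dots,n\}$), $b\ge1$ the quasilength, with $\tau(a,b)=(a-1,b)$ and irreducible maps $(a,b)\to(a,b+1)$, $(a,b)\to(a+1,b-1)$. For indecomposables $X,Y$, $\operatorname{Hom}_{\mathcal{C}_n}(X,Y)=\operatorname{Hom}_{\mathcal{T}_n}(X,Y)\oplus\operatorname{Hom}_{D^b}(X,\tau^{-1}Y[1])$; elements of the first summand are $\mathcal{T}$-maps, of the second $\mathcal{D}$-maps. $R^{\mathcal{T}}(X)$ (resp. $R^{\mathcal{D}}(X)$) is the set of indecomposables with a nonzero $\mathcal{T}$-map (resp. $\mathcal{D}$-map) to $X$. Wing of $X=(a,i)$, $i\le n-1$: $\{(a+s,i'):s\ge0,i'\ge1,s+i'\le i\}$. $T=\bigoplus_{i=1}^{n-1}T_i$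 is basic maximal rigid ($\operatorname{Ext}^1(T,T)=0$ and $\operatorname{Ext}^1(T\oplus Z,T\oplus Z)=0\Rightarrow Z\in\operatorname{add}T$); its unique summand of quasilength $n-1$ (top summand) is, by choice of coordinates, $T_1=(1,n-1)$. $\mathcal{F}$ is the set of indecomposables $(a,b)$, $a\in\{1,\dots,n\}$, with $b\le n-1$ or $a+b\le2n-1$. The quiver of $\Lambda_T=\operatorname{End}_{\mathcal{C}_n}(T)^{\mathrm{op}}$ has a vertex for each $T_i$ and arrows $i\to j$ for maps $T_j\to T_i$ irreducible in $\operatorname{add}T$. A string is a trivial string at a vertex, or a word in arrows and formal inverses with matching endpoints, no letter followed by its inverse, and no subword of it or its inverse a zero relation of $\Lambda_T$. For $*\in\{\mathcal{T},\mathcal{D}\}$: if $R^*(X)\cap\operatorname{add}T\neq\emptyset$, $\sigma^*_X$ denotes the unique string that traverses exactly the vertices of the summands of $T$ in $R^*(X)$, each exactly once, and ends at the vertex of the one of highest quasilength; otherwise $\sigma^*_X$ is the zero string. *)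

(* Defs.v *)
From mathcomp Require Import all_boot.
Set Implicit Arguments. Unset Strict Implicit. Unset Printing Implicit Defensive.

(** * Indecomposables of the tube / cluster tube
    An indecomposable is a pair (a, b): a in {1..n} (representative of Z/n),
    b >= 1 the quasilength.  (a,b) is the uniserial nilpotent representation
    whose composition factors, from the socle up, are the simples
    a, a+1, ..., a+b-1 (mod n); then (a,b) -> (a,b+1) is the irreducible
    mono, (a,b) -> (a+1,b-1) the irreducible epi, and tau (a,b) = (a-1,b). *)
Definition obj := (nat * nat)%type.

Definition valid (n : nat) (X : obj) : bool := (0 < X.1 <= n) && (0 < X.2).
Definition qlen (X : obj) : nat := X.2.

Definition tau (n : nat) (X : obj) : obj := (if X.1 == 1 then n else X.1.-1, X.2).

(** Basis of Hom_T(X,Y): a nonzero map (a,b) -> (c,d) is determined (up to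
    scalar) by the length l of its image, which is a quotient (a+b-l, l) of X
    and a submodule (c, l) of Y. *)
Definition tbasis (n : nat) (X Y : obj) : seq nat :=
  [seq l <- iota 1 (minn X.2 Y.2) | X.1 + X.2 - l == Y.1 %[mod n]].

Definition homT (n : nat) (X Y : obj) : bool := tbasis n X Y != [::].

(** D-maps X -> Y are elements of Hom_D(X, tau^-1 Y [1]) = Ext^1_T(X, tau^-1 Y)
    = D Hom_T(tau^-1 Y, tau X) = D Hom_T(Y, tau^2 X) (AR duality); the basis is the
    dual of the basis of Hom_T(Y, tau^2 X). *)
Definition dbasis (n : nat) (X Y : obj) : seq nat := tbasis n Y (tau n (tau n X)).

Definition homD (n : nat) (X Y : obj) : bool := dbasis n X Y != [::].

Definition RT (n : nat) (X : obj) : pred obj := fun Z => homT n Z X.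
Definition RD (n : nat) (X : obj) : pred obj := fun Z => homD n Z X.

(** Ext^1_{C_n}(X,Y) = Hom_{C_n}(X, Y[1]) and Y[1] = tau Y in C_n. *)
Definition extC (n : nat) (X Y : obj) : bool := homT n X (tau n Y) || homD n X (tau n Y).

Definition rigid (n : nat) (T : seq obj) : bool :=
  all (fun A => all (fun B => ~~ extC n A B) T) T.

Definition maximal_rigid (n : nat) (T : seq obj) : Prop :=
  rigid n T /\ (forall Z : obj, valid n Z -> rigid n (Z :: T) -> Z \in T).

Definition inF (n : nat) (X : obj) : bool :=
  valid n X && ((X.2 <= n - 1) || (X.1 + X.2 <= 2 * n - 1)).

(** An element (false, l) is the T-map with image length l, (true, h) the
    D-map dual to the basis element h of Hom_T(Y, tau^2 X).
    Composition of basis elements is (a nonzero multiple of) a basis element or 0;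
    [comp n X Y Z g f] is g \o f for f : X -> Y, g : Y -> Z (None = zero). *)
Definition elt := (bool * nat)%type.

Definition basis (n : nat) (X Y : obj) : seq elt :=
  [seq (false, l) | l <- tbasis n X Y] ++ [seq (true, l) | l <- dbasis n X Y].

Definition comp (n : nat) (X Y Z : obj) (g f : elt) : option elt :=
  match f, g with
  | (false, l), (false, m) =>
      if (Y.2 < l + m) && (l + m - Y.2 \in tbasis n X Z)
      then Some (false, l + m - Y.2) else None
  | (true, h), (false, m) =>
      (* F(g) o delta_h = delta_q, where phi_q o g_m = phi_h *)
      let q := h + Z.2 - m in
      if q \in dbasis n X Z then Some (true, q) else None
  | (false, l), (true, h) =>
      (* delta_h o f_l = delta_q, where tau^2 f_l o psi_q = psi_h *)
      let q := h + X.2 - l in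
      if q \in dbasis n X Z then Some (true, q) else None
  | (true, _), (true, _) => None
  end.

(** Radical basis: all basis elements, except the identity (false, qlen X)
    of an endomorphism ring. *)
Definition radb (n : nat) (X Y : obj) : seq elt :=
  [seq e <- basis n X Y | (X != Y) || (e != (false, X.2))].

Definition rad2 (n : nat) (T : seq obj) (X Y : obj) (e : elt) : bool :=
  has (fun Z => has (fun f => has (fun g => comp n X Z Y g f == Some e)
                                  (radb n Z Y))
                     (radb n X Z)) T.

(** An arrow (i, j, e) : i -> j is given by a basis element e : T_j -> T_i which
    is irreducible in add T (i.e. in rad, not in rad^2 of add T); vertices are
    named by the summands themselves. *)
Definition arrow := (obj * obj * elt)%type.

Definition is_arrow (n : nat) (T : seq obj) (a : arrow) : bool :=
  let: (i, j, e) := a in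
  [&& i \in T, j \in T, e \in radb n j i & ~~ rad2 n T j i e].

(** Map of Lambda_T associated with a path a_1 a_2 ... a_k
    (a_t : v_(t-1) -> v_t): the composite T_(v_k) -> T_(v_0); result is
    (source, target, element), None if zero. *)
Fixpoint path_map (n : nat) (p : seq arrow) : option (obj * obj * elt) :=
  match p with
  | [::] => None
  | [:: a] => let: (i, j, e) := a in Some (j, i, e)
  | a :: p' =>
      let: (i, j, e) := a in
      match path_map n p' with
      | Some (s, _, f) =>
          match comp n s j i e f with
          | Some g => Some (s, i, g)
          | None => None
          end
      | None => None
      end
  end.

Definition zero_rel (n : nat) (p : seq arrow) : bool :=
  (1 < size p) && (path_map n p == None).

(** A letter is an arrow with a direction (true = the arrow,
    false = its formal inverse).  A string is represented as a walk: a starting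
    vertex together with the sequence of letters read from the start to the
    end of the string; the trivial string at v is (v, [::]). *)
Definition letter := (arrow * bool)%type.

Definition l_from (L : letter) : obj := let: (i, j, _, d) := L in if d then i else j.
Definition l_to (L : letter) : obj := let: (i, j, _, d) := L in if d then j else i.

Fixpoint consistent (v : obj) (ls : seq letter) : bool :=
  match ls with
  | [::] => true
  | L :: ls' => (l_from L == v) && consistent (l_to L) ls'
  end.

Definition no_backtrack (ls : seq letter) : bool :=
  all (fun p : letter * letter => ~~ ((p.1.1 == p.2.1) && (p.1.2 != p.2.2)))
      (zip ls (behead ls)).

Definition no_zero_rel (n : nat) (ls : seq letter) : bool :=
  all (fun i => all (fun k =>
         let sub := take k (drop i ls) in
         [&& (all (fun L : letter => L.2) sub ==> ~~ zero_rel n (map fst sub))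
           & (all (fun L : letter => ~~ L.2) sub ==> ~~ zero_rel n (rev (map fst sub)))])
       (iota 0 (size ls).+1))
      (iota 0 (size ls).+1).

Definition str := (obj * seq letter)%type.

Definition is_string (n : nat) (T : seq obj) (s : str) : bool :=
  let: (v, ls) := s in
  [&& v \in T, all (fun L : letter => is_arrow n T L.1) ls, consistent v ls,
      no_backtrack ls & no_zero_rel n ls].

Definition walk (s : str) : seq obj := s.1 :: map l_to s.2.
Definition str_end (s : str) : obj := last s.1 (map l_to s.2).

(** sigma^*_X (with R = RT or RD): None is the zero string; otherwise a string
    traversing exactly the summands of T in R^*(X), each once, and ending at
    the one of highest quasilength. *)
Definition is_sigma (n : nat) (T : seq obj) (R : nat -> obj -> pred obj) (X : obj)
    (s : option str) : Prop :=
  let S := [seq t <- T | R n X t] in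
  if S == [::] then s = None
  else exists w : str,
      [/\ s = Some w, is_string n T w, uniq (walk w), walk w =i S
        & forall u, u \in S -> qlen u <= qlen (str_end w)].

(* Main.v *)
Require Import Defs.
From mathcomp Require Import all_boot.
From mathcomp Require Import zify.
Set Implicit Arguments. Unset Strict Implicit. Unset Printing Implicit Defensive.

Lemma homTE n x1 x2 y1 y2 : 0 < n -> 0 < x2 -> 0 < y2 -> x1 + x2 <= 2 * n -> y1 <= n ->
  homT n (x1, x2) (y1, y2) <->
  ((x1 + x2 - minn x2 y2 <= y1 /\ y1 <= x1 + x2 - 1) \/
   (x1 + x2 - minn x2 y2 <= y1 + n /\ y1 + n <= x1 + x2 - 1) \/
   (x1 + x2 - minn x2 y2 + n <= y1 /\ y1 <= x1 + x2 - 1 + n)).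
Proof.
move=> n0 x20 y20 hx hy; rewrite /homT /tbasis -has_filter /=; split.
- case/hasP=> l; rewrite mem_iota => /andP[l1 l2] /=.
  set u := x1 + x2 - l => hm.
  have hu : u < 2 * n by rewrite /u; lia.
  case: (leqP y1 u) => hyu.
  + move: hm; rewrite eqn_mod_dvd // => /dvdnP [k hk].
    have : k < 2 by nia.
    case: k hk => [|[|k]] hk _ //; try lia.
  + move: hm; rewrite eq_sym eqn_mod_dvd ?(ltnW hyu) // => /dvdnP [k hk].
    have : k < 2 by nia.
    case: k hk => [|[|k]] hk _ //; try lia.
- move=> H; apply/hasP.
  case: H => [[h1 h2]|[[h1 h2]|[h1 h2]]].
  + exists (x1 + x2 - y1); first by rewrite mem_iota; lia.
    by rewrite /= (_ : x1 + x2 - (x1 + x2 - y1) = y1) //; lia.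
  + exists (x1 + x2 - (y1 + n)); first by rewrite mem_iota; lia.
    by rewrite /= (_ : x1 + x2 - (x1 + x2 - (y1 + n)) = y1 + n) ?modnDr //; lia.
  + exists (x1 + x2 + n - y1); first by rewrite mem_iota; lia.
    apply/eqP; rewrite -(modnDr _ n); congr (_ %% _); lia.
Qed.


Definition wing n (t : obj) := 1 <= t.1 /\ 1 <= t.2 /\ t.1 + t.2 <= n.
Definition inFP n (X : obj) := 1 <= X.1 <= n /\ 1 <= X.2 /\ X.1 + X.2 <= 2 * n - 1.
Definition lam (t t' : obj) :=
  (t'.1 <= t.1 /\ t.1 + t.2 <= t'.1 + t'.2) \/ (t.1 <= t'.1 /\ t'.1 + t'.2 <= t.1 + t.2)
  \/ t.1 + t.2 + 1 <= t'.1 \/ t'.1 + t'.2 + 1 <= t.1.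

Lemma inFP_of n X : inF n X -> inFP n X.
Proof. case: X => a b; rewrite /inF /valid /inFP /=; lia. Qed.

Lemma RTf n X t : 2 <= n -> wing n t -> inFP n X ->
  RT n X t <-> (t.1 <= X.1 /\ X.1 + 1 <= t.1 + t.2 /\ t.1 + t.2 <= X.1 + X.2).
Proof.
case: X => a b; case: t => c d; rewrite /wing /inFP /RT /= => n2 hw hX.
rewrite homTE; lia.
Qed.

Lemma RDf n X t : 2 <= n -> wing n t -> inFP n X ->
  RD n X t <-> ((X.1 + 2 <= t.1 /\ t.1 <= X.1 + X.2 + 1 /\ X.1 + X.2 + 2 <= t.1 + t.2) \/
                (X.1 + 2 <= t.1 + n /\ t.1 + n <= X.1 + X.2 + 1 /\ X.1 + X.2 + 2 <= t.1 + t.2 + n)).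
Proof.
case: X => a b; case: t => c d.
have -> : RD n (a,b) (c,d) = homT n (a,b) (tau n (tau n (c,d))) by [].
rewrite /wing /inFP /tau /= => n2 hw hX.
case: (c =P 1) => [->|c1] /=.
- rewrite (_ : (n == 1) = false) /=; last by apply/negbTE; lia.
  rewrite homTE; lia.
- case: (c.-1 =P 1) => [c2|c2] /=; rewrite homTE; lia.
Qed.


Lemma lam_noext n A B : 2 <= n -> wing n A -> wing n B -> lam A B -> ~~ extC n A B.
Proof.
case: A => c d; case: B => c' d'; rewrite /wing /lam /extC /homD /dbasis -!/(homT _ _ _) /tau /= => n2 hA hB hl.
rewrite negb_or; apply/andP; split; apply/negP.
- case: (c' =P 1) => h1' /=; rewrite homTE; lia.
- have nn : (n == 1) = false by apply/negbTE; lia.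
  case: (c' =P 1) => h1' /=; case: (c =P 1) => h1 /=; rewrite ?nn /=;
  try case: (c.-1 =P 1) => /= ?; rewrite homTE; lia.
Qed.

Lemma cross_ext n A B : 2 <= n -> wing n A -> wing n B ->
  A.1 < B.1 -> B.1 <= A.1 + A.2 -> A.1 + A.2 < B.1 + B.2 -> extC n A B.
Proof.
case: A => c d; case: B => c' d'; rewrite /wing /extC /tau /= => n2 hA hB h1 h2 h3.
rewrite (_ : (c' == 1) = false) /=; last by apply/negbTE; lia.
apply/orP; left; rewrite homTE; lia.
Qed.

Lemma noext_lam n A B : 2 <= n -> wing n A -> wing n B -> ~~ extC n A B -> ~~ extC n B A -> lam A B.
Proof.
move=> n2 hA hB h1 h2.
case: (A.1 < B.1 <= A.1 + A.2) / andP => [[x1 x2]|x].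
  case: (ltnP (A.1 + A.2) (B.1 + B.2)) => x3.
    by rewrite cross_ext in h1.
  rewrite /lam; lia.
case: (B.1 < A.1 <= B.1 + B.2) / andP => [[y1 y2]|y].
  case: (ltnP (B.1 + B.2) (A.1 + A.2)) => y3.
    by rewrite cross_ext in h2.
  rewrite /lam; lia.
move: hA hB x y; rewrite /lam /wing; lia.
Qed.

Lemma rigid_len n t : 2 <= n -> valid n t -> ~~ extC n t t -> t.2 <= n - 1.
Proof.
case: t => c d; rewrite /valid /extC /= => n2 /andP[/andP[c0 cn] d0].
rewrite negb_or => /andP[/negP h _].
case: (leqP d (n - 1)) => // dn; exfalso; apply: h.
rewrite /homT /tbasis -has_filter; apply/hasP; exists (d - n + 1).
  rewrite mem_iota /tau /=; lia.
rewrite /tau /=; case: (c =P 1) => [->|c1] /=.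
  rewrite (_ : 1 + d - (d - n + 1) = n) //; lia.
rewrite (_ : c + d - (d - n + 1) = c.-1 + n); last by lia.
by rewrite modnDr.
Qed.

Lemma wing_of n t : 2 <= n -> valid n t -> ~~ extC n t t -> ~~ extC n t (1, n - 1) -> wing n t.
Proof.
move=> n2 v h1 h2; have dl := rigid_len n2 v h1.
move: v h2 dl; clear h1; case: t => c d; rewrite /valid /wing /extC /tau /= => /andP[/andP[c0 cn] d0].
rewrite negb_or => /andP[/negP h _] dl.
case: (leqP (c + d) n) => // cd; exfalso; apply: h.
idtac.
rewrite homTE; lia.
Qed.

Definition cont (t : obj) p := t.1 <= p /\ p < t.1 + t.2.
Definition sub (t t' : obj) := t'.1 <= t.1 /\ t.1 + t.2 <= t'.1 + t'.2.
Definition tspec (T : seq obj) (p : nat) (t : obj) :=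
  [/\ t \in T, cont t p, (forall t' : obj, t' \in T -> cont t' p -> sub t t'),
      (t.1 < p -> (t.1, p - t.1) \in T) &
      (p + 1 < t.1 + t.2 -> (p + 1, t.1 + t.2 - 1 - p) \in T)].

Record Good n T : Prop := {
  g_n : 2 <= n;
  g_wing : forall t : obj, t \in T -> wing n t;
  g_lam : forall t t' : obj, t \in T -> t' \in T -> lam t t';
  g_T1 : (1, n - 1) \in T;
  g_tp : forall p, 1 <= p <= n - 1 -> exists t : obj, tspec T p t }.

Lemma pt_eq n (T : seq obj) (p q : nat) (tp tq : obj) : Good n T -> tspec T p tp -> tspec T q tq ->
  cont tp q -> cont tq p -> p = q.
Proof.
move=> G [hp cp mp lp rp] [hq cq mq lq rq] c1 c2.
case: (ltngtP p q) => // h; exfalso.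
- have R : (p + 1, tp.1 + tp.2 - 1 - p) \in T.
    apply: rp; move: c1 cp; rewrite /cont; lia.
  have := mq _ R; move: c1 c2 cp cq; rewrite /cont /sub /=; lia.
- have R : (q + 1, tq.1 + tq.2 - 1 - q) \in T by apply: rq; move: c2 cq; rewrite /cont; lia.
  have := mp _ R; move: c1 c2 cp cq; rewrite /cont /sub /=; lia.
Qed.

Definition rt (X t : obj) := t.1 <= X.1 /\ X.1 + 1 <= t.1 + t.2 /\ t.1 + t.2 <= X.1 + X.2.
Definition rd n (X t : obj) :=
  (X.1 + 2 <= t.1 /\ t.1 <= X.1 + X.2 + 1 /\ X.1 + X.2 + 2 <= t.1 + t.2) \/
  (X.1 + 2 <= t.1 + n /\ t.1 + n <= X.1 + X.2 + 1 /\ X.1 + X.2 + 2 <= t.1 + t.2 + n).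
Definition notau n (T : seq obj) (X : obj) := forall t : obj, t \in T ->
  (t.1 = 1 -> ~ (X.1 = n /\ X.2 = t.2)) /\ (2 <= t.1 -> ~ (X.1 + 1 = t.1 /\ X.2 = t.2)).
Definition Same n (T : seq obj) (X Y : obj) :=
  (forall t : obj, t \in T -> (rt X t <-> rt Y t)) /\
  (forall t : obj, t \in T -> (rd n X t <-> rd n Y t)).

Lemma Same_sym n T X Y : Same n T X Y -> Same n T Y X.
Proof. by case=> h1 h2; split=> t ht; [rewrite (h1 t ht) | rewrite (h2 t ht)]. Qed.

Lemma getp n T p : Good n T -> 1 <= p -> p <= n - 1 -> exists t : obj, tspec T p t.
Proof. by move=> G h1 h2; apply: (g_tp G); rewrite h1 h2. Qed.

Lemma caseIII n T a b a' b' : Good n T -> inFP n (a,b) -> inFP n (a',b') ->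
  Same n T (a,b) (a',b') -> a <= n - 1 -> n <= a + b -> (a,b) = (a',b').
Proof.
move=> G hX hY [sT sD] h1 h2.
have n2 := g_n G; have T1 := g_T1 G.
move: hX hY; rewrite /inFP /= => hX hY.
have hY1 : a' <= n - 1 /\ n <= a' + b'.
  have := sT _ T1; rewrite /rt /=; lia.
have [ta tsa] := getp G (p := a) ltac:(lia) ltac:(lia).
have [ta' tsa'] := getp G (p := a') ltac:(lia) ltac:(lia).
have ea : a = a'.
  case: (tsa) => ha ca ma _ _; case: (tsa') => ha' ca' ma' _ _.
  have s1 := ma _ T1 ltac:(rewrite /cont /=; lia).
  have s2 := ma' _ T1 ltac:(rewrite /cont /=; lia).
  have e1 := sT _ ha; have e2 := sT _ ha'.
  apply: (pt_eq G tsa tsa').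
    move: e1 ca s1; rewrite /rt /cont /sub /=; lia.
  move: e2 ca' s2; rewrite /rt /cont /sub /=; lia.
subst a'.
suff : a + b = a + b' by move=> e; congr pair; lia.
case: (leqP (a + b) (2 * n - 2)) => hq; last first.
  case: (leqP (a + b') (2 * n - 2)) => hq'; last by lia.
  have := sD _ T1; rewrite /rd /=; lia.
have hq' : a + b' <= 2 * n - 2.
  have := sD _ T1; rewrite /rd /=; lia.
have [tq tsq] := getp G (p := a + b + 1 - n) ltac:(lia) ltac:(lia).
have [tq' tsq'] := getp G (p := a + b' + 1 - n) ltac:(lia) ltac:(lia).
case: (tsq) => hq1 cq _ _ _; case: (tsq') => hq1' cq' _ _ _.
have w1 := g_wing G hq1; have w2 := g_wing G hq1'.
have e1 := sD _ hq1; have e2 := sD _ hq1'.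
suff : a + b + 1 - n = a + b' + 1 - n by lia.
apply: (pt_eq G tsq tsq').
  move: e1 cq w1; rewrite /rd /cont /wing /=; lia.
move: e2 cq' w2; rewrite /rd /cont /wing /=; lia.
Qed.

Lemma IV_ne n T b : Good n T -> inFP n (n,b) -> notau n T (n,b) ->
  exists tq : obj, tspec T (b + 1) tq /\ rd n (n,b) tq.
Proof.
move=> G hX nt; have n2 := g_n G; have T1 := g_T1 G.
move: hX; rewrite /inFP /= => hX.
have hb : b + 1 <= n - 1 by have [h _] := nt _ T1; move: h; rewrite /=; lia.
have [tq tsq] := getp G (p := b + 1) ltac:(lia) hb.
exists tq; split => //; case: tsq => hq cq _ lq _.
have w := g_wing G hq.
case: (leqP 2 tq.1) => h2.
  move: cq w; rewrite /rd /cont /wing /=; lia.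
have L : (tq.1, b + 1 - tq.1) \in T by apply: lq; move: w; rewrite /wing; lia.
have [h _] := nt _ L; exfalso; apply: h => /=; move: w; rewrite /wing; lia.
Qed.

Lemma I_ne n T a b ta : Good n T -> inFP n (a,b) -> a + b <= n - 1 -> notau n T (a,b) ->
  tspec T a ta -> ~ rt (a,b) ta -> exists tp : obj, tspec T (a + b + 1) tp /\ rd n (a,b) tp.
Proof.
move=> G hX hab nt [ha ca _ _ ra] nrt; have n2 := g_n G.
move: hX; rewrite /inFP /= => hX.
have w := g_wing G ha.
have R : (a + 1, ta.1 + ta.2 - 1 - a) \in T.
  apply: ra; move: nrt ca w; rewrite /rt /cont /wing /=; lia.
have [_ ntR] := nt _ R.
have hR : ta.1 + ta.2 - 1 - a <> b by move=> e; apply: ntR => /=; lia.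
have [tp tsp] := getp G (p := a + b + 1) ltac:(lia) ltac:(move: nrt ca w hR; rewrite /rt /cont /wing /=; lia).
exists tp; split => //; case: tsp => hp cp mp lp _.
have s := mp _ R ltac:(move: nrt ca w hR; rewrite /rt /cont /wing /=; lia).
have wp := g_wing G hp.
case: (leqP (a + 2) tp.1) => h2.
  move: cp wp; rewrite /rd /cont /wing /=; lia.
have L : (tp.1, a + b + 1 - tp.1) \in T by apply: lp; move: s cp; rewrite /sub /cont /=; lia.
have [_ h] := nt _ L; exfalso; apply: h; move: s; rewrite /sub /=; lia.
Qed.

Lemma mixed n T b a' b' : Good n T -> inFP n (n,b) -> notau n T (n,b) ->
  inFP n (a',b') -> a' + b' <= n - 1 -> notau n T (a',b') ->
  Same n T (n,b) (a',b') -> False.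
Proof.
move=> G hX ntX hY hab ntY [sT sD]; have n2 := g_n G.
have [tq [tsq rq]] := IV_ne G hX ntX.
move: hX hY; rewrite /inFP /= => hX hY.
case: (tsq) => hq cq mq _ _; have w := g_wing G hq.
have rYq := (sD _ hq).1 rq.
have hq'' : a' + b' + 1 <= n - 1 by move: rYq w; rewrite /rd /wing /=; lia.
have [tq2 tsq2] := getp G (p := a' + b' + 1) ltac:(lia) hq''.
case: (tsq2) => hq2 cq2 mq2 _ _; have w2 := g_wing G hq2.
have c12 : cont tq (a' + b' + 1) by move: rYq w; rewrite /rd /cont /wing /=; lia.
have s := mq2 _ hq c12.
have rY2 : rd n (a',b') tq2 by move: rYq s cq2; rewrite /rd /sub /cont /=; lia.
have rX2 := (sD _ hq2).2 rY2.
have c21 : cont tq2 (b + 1) by move: rX2 w2; rewrite /rd /cont /wing /=; lia.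
have eb := pt_eq G tsq tsq2 c12 c21.
have [ta' [ha' ca' _ _ ra']] := getp G (p := a') ltac:(lia) ltac:(lia).
have w' := g_wing G ha'.
have nrt : ~ rt (a',b') ta'.
  move=> /(sT _ ha').2; move: w'; rewrite /rt /wing /=; lia.
have R : (a' + 1, ta'.1 + ta'.2 - 1 - a') \in T.
  apply: ra'; move: nrt ca' w'; rewrite /rt /cont /wing /=; lia.
have [_ ntR] := ntY _ R.
have hR : ta'.1 + ta'.2 - 1 - a' <> b' by move=> e; apply: ntR => /=; lia.
have rXR : rd n (n,b) (a' + 1, ta'.1 + ta'.2 - 1 - a').
  move: nrt ca' w' hR; rewrite /rd /rt /cont /wing /=; lia.
have := (sD _ R).1 rXR; rewrite /rd /=; lia.
Qed.

Lemma I_I_nonempty n T a b b' : Good n T -> inFP n (a,b) -> inFP n (a,b') ->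
  a + b' <= n - 1 -> notau n T (a,b) -> Same n T (a,b) (a,b') -> b < b' -> False.
Proof.
move=> G hX hY hab nt [sT sD] hb; have n2 := g_n G.
move: hX hY; rewrite /inFP /= => hX hY.
have [tp tsp] := getp G (p := a + b + 1) ltac:(lia) ltac:(lia).
case: (tsp) => hp cp mp lp _; have wp := g_wing G hp.
case: (boolP (a + 2 <= tp.1)) => h2.
  have rX : rd n (a,b) tp by move: cp wp; rewrite /rd /cont /wing /=; lia.
  have rY := (sD _ hp).1 rX.
  have [tq tsq] := getp G (p := a + b' + 1) ltac:(lia) ltac:(move: rY wp; rewrite /rd /wing /=; lia).
  case: (tsq) => hq cq mq _ _; have wq := g_wing G hq.
  have c12 : cont tp (a + b' + 1) by move: rY wp; rewrite /rd /cont /wing /=; lia.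
  have s := mq _ hp c12.
  have rY2 : rd n (a,b') tq by move: s cq wq h2; rewrite /rd /sub /cont /wing /=; lia.
  have rX2 := (sD _ hq).2 rY2.
  have c21 : cont tq (a + b + 1) by move: rX2 wq; rewrite /rd /cont /wing /=; lia.
  have := pt_eq G tsp tsq c12 c21; lia.
have L : (tp.1, a + b + 1 - tp.1) \in T by apply: lp; move: cp h2; rewrite /cont /=; lia.
have [_ ntL] := nt _ L.
case: (ltnP tp.1 (a + 1)) => h3.
  have := (sT _ L).2 ltac:(move: cp h2 h3; rewrite /rt /cont /=; lia).
  rewrite /rt /=; lia.
apply: ntL => /=; lia.
Qed.

Lemma I_I_empty n T a b a' b' ta' : Good n T -> inFP n (a,b) -> inFP n (a',b') ->
  a + b = a' + b' -> a' + b' <= n - 1 -> notau n T (a',b') -> Same n T (a,b) (a',b') ->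
  tspec T a' ta' -> ~ rt (a',b') ta' -> a < a' -> False.
Proof.
move=> G hX hY e hab nt [sT sD] [ha ca _ _ ra] nrt lt; have n2 := g_n G.
move: hX hY; rewrite /inFP /= => hX hY.
have w := g_wing G ha.
have R : (a' + 1, ta'.1 + ta'.2 - 1 - a') \in T.
  apply: ra; move: nrt ca w; rewrite /rt /cont /wing /=; lia.
have [_ ntR] := nt _ R.
have hR : ta'.1 + ta'.2 - 1 - a' <> b' by move=> e'; apply: ntR => /=; lia.
have rXR : rd n (a,b) (a' + 1, ta'.1 + ta'.2 - 1 - a').
  move: nrt ca w hR; rewrite /rd /rt /cont /wing /=; lia.
have := (sD _ R).1 rXR; rewrite /rd /=; lia.
Qed.

Lemma core n T a b a' b' : Good n T -> inFP n (a,b) -> inFP n (a',b') ->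
  notau n T (a,b) -> notau n T (a',b') -> Same n T (a,b) (a',b') -> (a,b) = (a',b').
Proof.
move=> G hX hY ntX ntY S; have n2 := g_n G; have T1 := g_T1 G.
have S' := Same_sym S.
case: (S) => sT sD.
have fX := hX; have fY := hY; move: fX fY; rewrite /inFP /= => fX fY.
case: (boolP ((a <= n - 1) && (n <= a + b))) => hIII.
  by move/andP: hIII => [h1 h2]; exact: (caseIII G hX hY S h1 h2).
case: (boolP ((a' <= n - 1) && (n <= a' + b'))) => hIII'.
  by move/andP: hIII' => [h1 h2]; exact: (esym (caseIII G hY hX S' h1 h2)).
have rX1 : ~ rt (a,b) (1, n - 1) by rewrite /rt /=; lia.
case: (ltnP a n) => ha; case: (ltnP a' n) => ha'.
-
  have abI : a + b <= n - 1 by lia.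
  have abI' : a' + b' <= n - 1 by lia.
  have [ta tsa] := getp G (p := a) ltac:(lia) ltac:(lia).
  have [ta' tsa'] := getp G (p := a') ltac:(lia) ltac:(lia).
  case: (tsa) => hta ca ma _ _; case: (tsa') => hta' ca' ma' _ _.
  case: (boolP ((ta.1 + ta.2 <= a + b))) => hr.
  + have rX : rt (a,b) ta by move: ca hr; rewrite /rt /cont /=; lia.
    have rY := (sT _ hta).1 rX.
    have c1 : cont ta a' by move: rY; rewrite /rt /cont /=; lia.
    have s := ma' _ hta c1.
    have rY' : rt (a',b') ta' by move: rY s ca'; rewrite /rt /sub /cont /=; lia.
    have rX' := (sT _ hta').2 rY'.
    have c2 : cont ta' a by move: rX'; rewrite /rt /cont /=; lia.
    have ea := pt_eq G tsa tsa' c1 c2; subst a'.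
    case: (ltngtP b b') => hb.
    * by exfalso; apply: (I_I_nonempty G hX hY abI' ntX S hb).
    * by exfalso; apply: (I_I_nonempty G hY hX abI ntY S' hb).
    * by rewrite hb.
  + have nrX : ~ rt (a,b) ta by rewrite /rt /=; lia.
    have nrY : ~ rt (a',b') ta'.
      move=> /(sT _ hta').2 rX'.
      have c2 : cont ta' a by move: rX'; rewrite /rt /cont /=; lia.
      have s := ma _ hta' c2.
      apply: nrX; move: rX' s ca; rewrite /rt /sub /cont /=; lia.
    have [tp [tsp rp]] := I_ne G hX abI ntX tsa nrX.
    have [tq [tsq rq]] := I_ne G hY abI' ntY tsa' nrY.
    case: (tsp) => hp cp _ _ _; case: (tsq) => hq cq _ _ _.
    have wp := g_wing G hp; have wq := g_wing G hq.
    have rYp := (sD _ hp).1 rp.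
    have rXq := (sD _ hq).2 rq.
    have c1 : cont tp (a' + b' + 1) by move: rYp wp; rewrite /rd /cont /wing /=; lia.
    have c2 : cont tq (a + b + 1) by move: rXq wq; rewrite /rd /cont /wing /=; lia.
    have e := pt_eq G tsp tsq c1 c2.
    have e' : a + b = a' + b' by lia.
    case: (ltngtP a a') => hh.
    * by exfalso; apply: (I_I_empty G hX hY e' abI' ntY S tsa' nrY hh).
    * by exfalso; apply: (I_I_empty G hY hX (esym e') abI ntX S' tsa nrX hh).
    * congr pair; lia.
-
  have ea' : a' = n by lia.
  subst a'; exfalso; apply: (mixed G hY ntY hX _ ntX S'); lia.
- have ea : a = n by lia.
  subst a; exfalso; apply: (mixed G hX ntX hY _ ntY S); lia.
- have ea : a = n by lia.
  have ea' : a' = n by lia.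
  subst a a'.
  have [tq [tsq rq]] := IV_ne G hX ntX.
  have [tq' [tsq' rq']] := IV_ne G hY ntY.
  case: (tsq) => hq cq _ _ _; case: (tsq') => hq' cq' _ _ _.
  have wq := g_wing G hq; have wq' := g_wing G hq'.
  have rYq := (sD _ hq).1 rq.
  have rXq := (sD _ hq').2 rq'.
  have c1 : cont tq (b' + 1) by move: rYq wq; rewrite /rd /cont /wing /=; lia.
  have c2 : cont tq' (b + 1) by move: rXq wq'; rewrite /rd /cont /wing /=; lia.
  have := pt_eq G tsq tsq' c1 c2 => e; congr pair; lia.
Qed.

Lemma rigidP n (T : seq obj) (A B : obj) : rigid n T -> A \in T -> B \in T -> ~~ extC n A B.
Proof. by move=> /allP /(_ A) h hA hB; move: (h hA) => /allP /(_ B hB). Qed.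

Lemma lam_sym A B : lam A B -> lam B A.
Proof. rewrite /lam; lia. Qed.

Lemma child_in n (T : seq obj) (Z : obj) : 2 <= n -> maximal_rigid n T ->
  (forall t : obj, t \in T -> wing n t) -> wing n Z ->
  (forall B : obj, B \in T -> lam Z B) -> Z \in T.
Proof.
move=> n2 [rT mT] wT wZ lZ; apply: mT.
  by move: wZ; rewrite /wing /valid; lia.
apply/allP => A hA; apply/allP => B hB; move: hA hB; rewrite !inE.
case/orP => [/eqP -> | hA]; case/orP => [/eqP -> | hB].
- by apply: lam_noext => //; rewrite /lam; lia.
- by apply: lam_noext => //; [apply: wT | apply: lZ].
- by apply: lam_noext => //; [apply: wT | apply: lam_sym; apply: lZ].
- exact: (rigidP rT hA hB).
Qed.

Lemma tp_of n (T : seq obj) p (t : obj) : 2 <= n -> p <= n - 1 -> maximal_rigid n T ->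
  (forall t : obj, t \in T -> wing n t) ->
  (forall t t' : obj, t \in T -> t' \in T -> lam t t') ->
  t \in T -> cont t p -> (forall t' : obj, t' \in T -> cont t' p -> t.2 <= t'.2) ->
  tspec T p t.
Proof.
move=> n2 p2 mr wT lT ht ct' mink.
have mint : forall t' : obj, t' \in T -> cont t' p -> sub t t'.
  move=> t' ht' c'; have l := lT _ _ ht ht'; have := mink _ ht' c'.
  move: l c' ct'; rewrite /lam /cont /sub; lia.
have wt := wT _ ht.
split => //.
- move=> hlt; apply: (child_in n2 mr wT).
    by move: wt ct'; rewrite /wing /cont /=; lia.
  move=> B hB; have l := lT _ _ ht hB; have m := mint _ hB; have wB := wT _ hB.
  move: l m wB ct' hlt; rewrite /lam /cont /sub /wing /=; lia.
- move=> hlt; apply: (child_in n2 mr wT).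
    by move: wt ct'; rewrite /wing /cont /=; lia.
  move=> B hB; have l := lT _ _ ht hB; have m := mint _ hB; have wB := wT _ hB.
  move: l m wB ct' hlt; rewrite /lam /cont /sub /wing /=; lia.
Qed.

Lemma good_of n (T : seq obj) : 2 <= n -> all (valid n) T -> maximal_rigid n T ->
  (1, n - 1) \in T -> Good n T.
Proof.
move=> n2 vT mr T1.
have rT := mr.1.
have wT : forall t : obj, t \in T -> wing n t.
  move=> t ht; apply: wing_of => //.
  - exact: (allP vT).
  - exact: (rigidP rT ht ht).
  - exact: (rigidP rT ht T1).
have lT : forall t t' : obj, t \in T -> t' \in T -> lam t t'.
  by move=> t t' h h'; exact: (noext_lam n2 (wT _ h) (wT _ h') (rigidP rT h h') (rigidP rT h' h)).
split => // p /andP [p1 p2].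
pose P k := has (fun t : obj => (t.1 <= p < t.1 + t.2) && (t.2 == k)) T.
have exP : exists k, P k.
  exists (n - 1); apply/hasP; exists (1, n - 1) => //=; apply/andP; split => //; lia.
case: (ex_minnP exP) => k /hasP [t ht /andP [ct /eqP tk]] mink.
exists t; apply: (tp_of n2 p2 mr wT lT ht).
  by move: ct; rewrite /cont; lia.
move=> t' ht' c'; rewrite tk; apply: mink; apply/hasP; exists t' => //.
apply/andP; split => //; move: c'; rewrite /cont; lia.
Qed.

Lemma sigma_eq n (T : seq obj) R X Y s1 s2 : is_sigma n T R X s1 -> is_sigma n T R Y s2 ->
  s1 = s2 -> forall t : obj, t \in T -> R n X t = R n Y t.
Proof.
rewrite /is_sigma; case: ifP => hX; case: ifP => hY.
- move=> _ _ _ t ht.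
  have hx : t \notin [seq t <- T | R n X t] by rewrite (eqP hX).
  have hy : t \notin [seq t <- T | R n Y t] by rewrite (eqP hY).
  by move: hx hy; rewrite !mem_filter ht !andbT => /negbTE -> /negbTE ->.
- by move=> -> [w [-> _ _ _ _]].
- by move=> [w [-> _ _ _ _]] ->.
- move=> [w [-> _ _ hw _]] [w' [-> _ _ hw' _]] [e] t ht; subst w'.
  have := hw t; rewrite hw' !mem_filter ht !andbT; done.
Qed.

Lemma notau_of n (T : seq obj) (X : obj) : 2 <= n -> X \notin map (tau n) T -> notau n T X.
Proof.
move=> n2 hX t ht; split.
- move=> t1 [e1 e2]; move/negP: hX; apply; apply/mapP; exists t => //.
  rewrite /tau t1 /=; case: X e1 e2 => x y /= -> ->; done.
- move=> t2 [e1 e2]; move/negP: hX; apply; apply/mapP; exists t => //.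
  rewrite /tau (_ : (t.1 == 1) = false); last by apply/negbTE; lia.
  case: X e1 e2 => x y /= e1 ->; congr pair; lia.
Qed.

Theorem lemma4p5 (n : nat) (T : seq obj) :
  2 <= n ->
  all (valid n) T -> uniq T -> size T = n - 1 -> maximal_rigid n T ->
  (1, n - 1) \in T ->
  forall X Y : obj,
  inF n X -> inF n Y ->
  X \notin map (tau n) T -> Y \notin map (tau n) T ->
  forall sTX sTY sDX sDY : option str,
  is_sigma n T RT X sTX -> is_sigma n T RT Y sTY ->
  is_sigma n T RD X sDX -> is_sigma n T RD Y sDY ->
  sTX = sTY -> sDX = sDY -> X = Y.
Proof.
move=> n2 vT _ _ mr T1 X Y fX fY tX tY sTX sTY sDX sDY hTX hTY hDX hDY eT eD.
have G := good_of n2 vT mr T1.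
have pX := inFP_of fX; have pY := inFP_of fY.
have eRT := sigma_eq hTX hTY eT; have eRD := sigma_eq hDX hDY eD.
have S : Same n T X Y.
  split => t ht; have w := g_wing G ht.
  - split => [/(RTf n2 w pX) | /(RTf n2 w pY)].
      by rewrite (eRT t ht) => /(RTf n2 w pY).
    by rewrite -(eRT t ht) => /(RTf n2 w pX).
  - split => [/(RDf n2 w pX) | /(RDf n2 w pY)].
      by rewrite (eRD t ht) => /(RDf n2 w pY).
    by rewrite -(eRD t ht) => /(RDf n2 w pX).
have nX := notau_of n2 tX; have nY := notau_of n2 tY.
clear -G pX pY nX nY S; move: pX pY nX nY S; case: X => a b; case: Y => a' b' => pX pY nX nY S.
exact: (core G pX pY nX nY S).
Qed.
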